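(* Let $G$ be a graph on $n$ vertices with maximum degree $d$ and let $\lambda>0$ with $\lambda\le\frac{1}{2\sqrt e\,d-1}$. Consider the algorithm: mark each vertex occupied independently with probability $\frac{\lambda}{1+\lambda}$; while there is at least one edge with both endpoints occupied, let $B$ be the set of vertices lying in connected components of size at least $2$ of the subgraph induced by the occupied vertices, and independently re-mark each vertex of $B\cup\partial B$ occupied with probability $\frac{\lambda}{1+\lambda}$; output the set of occupied vertices. Then the output is an independent set $I$ of $G$ drawn with probability proportional to $\lambda^{|I|}$, and the algorithm runs in expected $O(n)$ time.
   Context: $\partial B$ denotes the set of vertices not in $B$ that are adjacent to some vertex of $B$. *)

(* Defs.v *)
From HB Require Import structures.
From mathcomp Require Import all_boot all_order all_algebra.
From mathcomp Require Import all_classical all_reals all_analysis.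
Set Implicit Arguments. Unset Strict Implicit. Unset Printing Implicit Defensive.
Import Order.TTheory GRing.Theory Num.Theory.
Local Open Scope ring_scope.

Definition simple_graph (T : finType) (e : rel T) : Prop :=
  symmetric e /\ irreflexive e.

Definition max_degree (T : finType) (e : rel T) : nat :=
  (\max_(v : T) #|[set u | e v u]|)%N.

Definition indep (T : finType) (e : rel T) (S : {set T}) : bool :=
  [forall x in S, forall y in S, ~~ e x y].

Definition induced_rel (T : finType) (e : rel T) (S : {set T}) : rel T :=
  [rel x y | [&& e x y, x \in S & y \in S]].

Definition badset (T : finType) (e : rel T) (S : {set T}) : {set T} :=
  [set v in S | (2 <= #|[set u | connect (induced_rel e S) v u]|)%N].

Definition vboundary (T : finType) (e : rel T) (B : {set T}) : {set T} :=
  [set u | (u \notin B) && [exists w in B, e w u]].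

Definition resample_set (T : finType) (e : rel T) (S : {set T}) : {set T} :=
  badset e S :|: vboundary e (badset e S).

Section PRS.
Variables (R : realType) (T : finType) (e : rel T) (lam : R).

Definition occ_prob : R := lam / (1 + lam).

Definition init_dist (S : {set T}) : R :=
  occ_prob ^+ #|S| * (1 - occ_prob) ^+ #|~: S|.

(* one round of the algorithm as a Markov kernel; independent (final)
   states are absorbing *)
Definition prs_step (S S' : {set T}) : R :=
  if indep e S then (S' == S)%:R
  else let Rs := resample_set e S in
       if [forall v in ~: Rs, (v \in S') == (v \in S)]
       then occ_prob ^+ #|S' :&: Rs| * (1 - occ_prob) ^+ #|Rs :\: S'|
       else 0.

Fixpoint prs_dist (t : nat) : {set T} -> R :=
  match t with
  | 0%N => init_dist
  | t'.+1 => fun S' => \sum_(S : {set T}) prs_dist t' S * prs_step S S'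
  end.

Definition hardcore_Z : R := \sum_(I : {set T} | indep e I) lam ^+ #|I|.

Definition round_cost (S : {set T}) : nat :=
  if indep e S then 0%N else #|resample_set e S|.

Definition expected_cost (t : nat) : R :=
  #|T|%:R + \sum_(i < t) \sum_(S : {set T}) prs_dist i S * (round_cost S)%:R.

End PRS.

(* Main.v *)
Require Import Defs.
From HB Require Import structures.
From mathcomp Require Import all_boot all_order all_algebra.
From mathcomp Require Import all_classical all_reals all_analysis.
From mathcomp Require Import ring lra.
Set Implicit Arguments. Unset Strict Implicit. Unset Printing Implicit Defensive.
Import Order.TTheory GRing.Theory Num.Theory.
Import numFieldNormedType.Exports.
Local Open Scope ring_scope.

Section Comb.
Variables (T : finType) (e : rel T).
Hypotheses (esym : symmetric e) (eirr : irreflexive e).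

Definition bad (S : {set T}) : {set T} := [set v in S | [exists u in S, e v u]].
Definition Nb (A : {set T}) : {set T} := A :|: vboundary e A.

Lemma badsetE S : badset e S = bad S.
Proof.
apply/setP => v; rewrite !inE; case vS: (v \in S) => //=.
apply/idP/idP.
- case/card_gt1P => x [y [xi yi xy]].
  have [u uc uv] : exists2 u, connect (induced_rel e S) v u & u != v.
    rewrite !inE in xi yi.
    case: (eqVneq x v) => [xv|xv]; last by exists x.
    by exists y => //; rewrite -xv eq_sym.
  move: uc uv; case/connectP=> [[|x1 p]] /= pth lst; first by rewrite lst eqxx.
  case/andP: pth => /andP [evx /andP [_ x1S]] _ _.
  by apply/existsP; exists x1; rewrite x1S.
- case/existsP=> u /andP [uS evu].
  apply/card_gt1P; exists v, u; rewrite !inE connect0; split => //.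
    by apply: connect1; rewrite /induced_rel /= evu vS uS.
  by apply/eqP => uv; rewrite uv eirr in evu.
Qed.

Lemma indep_bad S : indep e S = (bad S == finset.set0).
Proof.
apply/idP/idP.
- move/forallP => H; apply/eqP/setP => v; rewrite !inE.
  apply/negP => /andP [vS /existsP [u /andP [uS evu]]].
  by move: (H v); rewrite vS /= => /forallP /(_ u); rewrite uS evu.
- move/eqP/setP => H; apply/forallP => v; apply/implyP => vS.
  apply/forallP => u; apply/implyP => uS; apply/negP => evu.
  by move: (H v); rewrite !inE vS /=; move/negbT/negP; apply; apply/existsP; exists u; rewrite uS.
Qed.

Lemma bad_sub S : bad S \subset S.
Proof. by apply/fintype.subsetP => v; rewrite inE => /andP []. Qed.

Lemma Nb_sub (A : {set T}) : A \subset Nb A.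
Proof. exact: finset.subsetUl. Qed.

Lemma Nb0 : Nb finset.set0 = finset.set0.
Proof.
apply/setP => v; rewrite !inE /=; apply/negbTE/existsPn => w; by rewrite inE.
Qed.

Lemma resampleE S : resample_set e S = Nb (bad S).
Proof. by rewrite /resample_set badsetE. Qed.

Lemma SNb S : S :&: Nb (bad S) = bad S.
Proof.
apply/setP => v; rewrite !inE.
case vS: (v \in S) => //=.
case: (boolP [exists u in S, e v u]) => //= H.
apply/negbTE/negP => /existsP [w /andP [wb ewv]].
move: wb; rewrite inE => /andP [wS _].
move/negP: H; apply; apply/existsP; exists w; by rewrite wS esym.
Qed.

Lemma bad_union (A X : {set T}) : [disjoint X & Nb A] -> bad (A :|: X) = bad A :|: bad X.
Proof.
move=> dis; apply/setP => v; rewrite !inE.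
have XnA : forall x, x \in X -> x \notin A /\ ~~ [exists w in A, e w x].
  move=> x xX; have := disjointFr dis xX; rewrite !inE.
  by case: (x \in A) => //=; case: [exists w in A, e w x].
case vA: (v \in A) => /=.
- have vX : v \in X = false.
    by apply/negbTE/negP => /XnA []; rewrite vA.
  rewrite vX andFb orbF; apply/existsP/existsP => [[u]|[u]].
    rewrite inE => /andP [/orP [uA|uX] evu]; first by exists u; rewrite uA.
    by case: (XnA u uX) => _ /negP []; apply/existsP; exists v; rewrite vA.
  by move=> /andP [uA evu]; exists u; rewrite inE uA.
- case vX: (v \in X) => //=; apply/existsP/existsP => [[u]|[u]].
    rewrite inE => /andP [/orP [uA|uX] evu]; last by exists u; rewrite uX.
    by case: (XnA v vX) => _ /negP []; apply/existsP; exists u; rewrite uA esym.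
  by move=> /andP [uX evu]; exists u; rewrite inE uX orbT.
Qed.

Lemma bad_diff (S Z : {set T}) : bad (S :\: Z) = bad (bad S :\: Z).
Proof.
apply/setP => v; rewrite !inE.
case vZ: (v \in Z) => //=.
case vS: (v \in S) => //=.
apply/existsP/andP => [[u]|[H /existsP [u]]].
  rewrite !inE => /andP [/andP [uZ uS] evu]; split.
    by apply/existsP; exists u; rewrite uS.
  apply/existsP; exists u; rewrite !inE uZ uS evu /= andbT; apply/existsP; exists v.
  by rewrite vS esym.
by rewrite !inE => /andP [/and3P [uZ uS _] evu]; exists u; rewrite !inE uZ uS.
Qed.

End Comb.

Section Alg.
Variables (R : realType) (T : finType) (e : rel T) (lam : R).
Hypotheses (esym : symmetric e) (eirr : irreflexive e) (lam_gt0 : 0 < lam).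

Let p := occ_prob lam.
Let q : R := 1 - p.

Lemma p_gt0 : 0 < p.
Proof. by rewrite /p /occ_prob divr_gt0 // addr_gt0. Qed.
Lemma p_lt1 : p < 1.
Proof. by rewrite /p /occ_prob ltr_pdivrMr ?addr_gt0 // mul1r ltrDr. Qed.
Lemma q_gt0 : 0 < q.
Proof. by rewrite /q subr_gt0 p_lt1. Qed.

Definition pq (b : bool) : R := if b then p else q.
Lemma pq_ge0 b : 0 <= pq b.
Proof. by case: b; apply: ltW; [apply: p_gt0 | apply: q_gt0]. Qed.

Definition mu (S : {set T}) : R := \prod_i pq (i \in S).
Definition rho (Rs S S' : {set T}) : R :=
  \prod_i (if i \in Rs then pq (i \in S') else ((i \in S') == (i \in S))%:R).
Definition wt (A : {set T}) : R :=
  \prod_i (if i \in Nb e A then pq (i \in A) else 1).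

Lemma mu_ge0 S : 0 <= mu S.
Proof. by apply: prodr_ge0 => i _; apply: pq_ge0. Qed.
Lemma rho_ge0 Rs S S' : 0 <= rho Rs S S'.
Proof. by apply: prodr_ge0 => i _; case: ifP => _; [apply: pq_ge0 | apply: ler0n]. Qed.
Lemma wt_ge0 A : 0 <= wt A.
Proof. by apply: prodr_ge0 => i _; case: ifP => _; [apply: pq_ge0 | apply: ler01]. Qed.

Lemma prod_ind (P : pred T) : \prod_i (P i)%:R = ([forall i, P i]%:R : R).
Proof.
case: (boolP [forall i, P i]) => H.
  by rewrite big1 // => i _; rewrite (forallP H).
move: H; rewrite negb_forall => /existsP [i Hi].
by rewrite (bigD1 i) //= (negbTE Hi) mul0r.
Qed.

Lemma prod_pq (A : {set T}) (P : pred T) :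
  \prod_(i | P i) pq (i \in A) = p ^+ #|[set i | P i && (i \in A)]| * q ^+ #|[set i | P i && (i \notin A)]|.
Proof.
rewrite (bigID (fun i => i \in A)) /=.
rewrite (eq_bigr (fun _ => p)); last by move=> i /andP [_ H]; rewrite /pq H.
rewrite [X in _ * X](eq_bigr (fun _ => q)); last by move=> i /andP [_ H]; rewrite /pq (negbTE H).
rewrite !prodr_const; congr (_ ^+ _ * _ ^+ _); apply: eq_card => i; by rewrite !inE.
Qed.

Lemma mu_init S : init_dist lam S = mu S.
Proof.
rewrite /init_dist /mu (prod_pq S predT); congr (_ ^+ _ * _ ^+ _); apply: eq_card => i; by rewrite !inE.
Qed.

Lemma mu_rhoT S0 S : mu S = rho (finset.setT) S0 S.
Proof. by apply: eq_bigr => i _; rewrite finset.in_setT. Qed.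

Lemma rho_sum Rs S : \sum_S' rho Rs S S' = 1.
Proof.
have := @bigA_distr R 0 1 *%R +%R T (fun i => if i \in Rs then p else (i \in S)%:R)
  (fun i => if i \in Rs then q else (i \notin S)%:R).
rewrite big1 => [E|i _]; last by case: ifP => _ /=; [rewrite /q addrCA subrr addr0 | case: (i \in S); rewrite /= ?addr0 ?add0r].
rewrite E; apply: eq_bigr => J _; apply: eq_bigr => i _.
by rewrite /pq; case: (i \in Rs); case: (i \in J); case: (i \in S).
Qed.

Definition al (Rs S : {set T}) (x : T) : R := if x \in Rs then p else (x \in S)%:R.

Lemma ind2_prod (v u : T) (J : {set T}) : v != u ->
  ((v \in J) && (u \in J))%:R = \prod_i (if (i == v) || (i == u) then (i \in J)%:R else 1 : R).
Proof.
move=> vu; rewrite (bigD1 v) //= eqxx /= (bigD1 u) /=; last by rewrite eq_sym vu.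
rewrite eqxx orbT big1 ?mulr1 => [|i /andP [iu iv]]; last by rewrite (negbTE iu) (negbTE iv).
by case: (v \in J); case: (u \in J); rewrite /= ?mul1r ?mul0r.
Qed.

Lemma rho_marg2 Rs S v u : v != u ->
  \sum_S' rho Rs S S' * ((v \in S') && (u \in S'))%:R = al Rs S v * al Rs S u.
Proof.
move=> vu.
have := @bigA_distr R 0 1 *%R +%R T (al Rs S)
  (fun i => if (i == v) || (i == u) then 0 else if i \in Rs then q else (i \notin S)%:R).
rewrite (bigD1 v) //= eqxx /= (bigD1 u) /=; last by rewrite eq_sym vu.
rewrite eqxx orbT big1 ?mulr1 => [E|i /andP [iu iv]]; last first.
  rewrite (negbTE iu) (negbTE iv) /al; case: ifP => _ /=; first by rewrite /q addrCA subrr addr0.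
  by case: (i \in S); rewrite /= ?addr0 ?add0r.
rewrite !addr0 in E; rewrite E; apply: eq_bigr => J _.
rewrite ind2_prod // -big_split /=; apply: eq_bigr => i _.
rewrite /al /pq; case: (i \in Rs); case: ((i == v) || (i == u)); case: (i \in J);
  case: (i \in S); by rewrite /= ?mulr1 ?mulr0.
Qed.

Lemma prod_ind_cond (P Q : pred T) : \prod_(i | P i) (Q i)%:R = ([forall i, P i ==> Q i]%:R : R).
Proof.
rewrite big_mkcond /= -(prod_ind (fun i => P i ==> Q i)); apply: eq_bigr => i _; by case: (P i).
Qed.

Lemma step_rho S S' : prs_step e lam S S' = rho (Nb e (bad e S)) S S'.
Proof.
rewrite /prs_step indep_bad //; case: eqP => [H|H].
  rewrite H Nb0 /rho.
  under eq_bigr do rewrite finset.in_set0.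
  rewrite (prod_ind (fun i => (i \in S') == (i \in S))); congr ((nat_of_bool _)%:R).
  apply/idP/forallP => [/eqP -> i|h] //; by apply/eqP/setP => i; apply/eqP/h.
rewrite resampleE //; set Rs := Nb e (bad e S).
rewrite /rho (bigID (fun i => i \in Rs)) /=.
rewrite (eq_bigr (fun i => pq (i \in S'))); last by move=> i ->.
rewrite prod_pq.
rewrite [X in _ = _ * X](eq_bigr (fun i => ((i \in S') == (i \in S))%:R)); last by move=> i /negbTE ->.
rewrite prod_ind_cond.
have -> : [forall i, ~~ (i \in Rs) ==> ((i \in S') == (i \in S))] =
          [forall v in ~: Rs, (v \in S') == (v \in S)].
  by apply: eq_forallb => i; rewrite finset.in_setC.
case: ifP => _; last by rewrite mulr0.
rewrite mulr1; congr (_ ^+ _ * _ ^+ _); apply: eq_card => i; by rewrite !inE // andbC.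
Qed.

Definition cnd (A S S' : {set T}) : bool := [forall i, (i \in Nb e A) || ((i \in S') == (i \in S))].

Lemma mu_rho S S' :
  mu S * rho (Nb e (bad e S)) S S' = mu S' * wt (bad e S) * (cnd (bad e S) S S')%:R.
Proof.
rewrite /cnd -(prod_ind (fun i => (i \in Nb e (bad e S)) || ((i \in S') == (i \in S)))).
rewrite /mu /rho /wt -!big_split /=; apply: eq_bigr => i _.
case Hi: (i \in Nb e (bad e S)) => /=.
  have -> : (i \in S) = (i \in bad e S) by rewrite -(SNb esym S) inE Hi andbT.
  by rewrite mulr1 mulrC.
rewrite mulr1; case: (i \in S'); case: (i \in S); by rewrite /= ?mulr0.
Qed.

Lemma cond_uniq S S' A : bad e S = A -> cnd A S S' -> S = A :|: (S' :\: Nb e A).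
Proof.
move=> bS /forallP c; apply/setP => i; rewrite finset.in_setU finset.in_setD.
case Hi: (i \in Nb e A) => /=.
  by rewrite orbF -bS -(SNb esym S) finset.in_setI bS Hi andbT.
have := c i; rewrite Hi /= => /eqP <-.
have -> : (i \in A) = false.
  by apply/negbTE/negP => iA; move: Hi; rewrite /Nb inE iA.
by [].
Qed.

Lemma cond_S0 S' A : cnd A (A :|: (S' :\: Nb e A)) S'.
Proof.
apply/forallP => i; case Hi: (i \in Nb e A) => //=.
rewrite finset.in_setU finset.in_setD Hi /=.
have -> : (i \in A) = false.
  by apply/negbTE/negP => iA; move: Hi; rewrite /Nb inE iA.
by [].
Qed.

Lemma regroup_sum S' (g : {set T} -> R) :
  \sum_S g (bad e S) * (cnd (bad e S) S S')%:R
  = \sum_A g A * (bad e (A :|: (S' :\: Nb e A)) == A)%:R.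
Proof.
rewrite (partition_big (fun S => bad e S) predT) //=.
apply: eq_bigr => A _.
case: (boolP (bad e (A :|: (S' :\: Nb e A)) == A)) => H.
  rewrite (bigD1 (A :|: (S' :\: Nb e A))) /=; last by [].
  rewrite (eqP H) cond_S0 mulr1 big1 ?addr0 // => S /andP [/eqP bS nS].
  rewrite bS; case: (boolP (cnd A S S')) => c; last by rewrite mulr0.
  by move/negP: nS; case; apply/eqP; apply: cond_uniq.
rewrite mulr0 big1 // => S /eqP bS; rewrite bS.
case: (boolP (cnd A S S')) => c; last by rewrite mulr0.
have E := cond_uniq bS c; move: H; rewrite -E bS eqxx //.
Qed.

Lemma disj_setD (X Y : {set T}) : [disjoint X :\: Y & Y].
Proof. by rewrite finset.disjoints_subset subsetDr. Qed.

Lemma key_c S' A : bad e (A :|: (S' :\: Nb e A)) = bad e (A :|: (bad e S' :\: Nb e A)).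
Proof. by rewrite !bad_union // ?disj_setD // bad_diff. Qed.

Lemma inv t : exists psi : {set T} -> R, (forall B, 0 <= psi B) /\
  forall S, prs_dist e lam t S = mu S * psi (bad e S).
Proof.
elim: t => [|t [psi [psi0 IH]]].
  by exists (fun _ => 1) => /=; split => [B|S]; rewrite ?ler01 // mu_init mulr1.
exists (fun B => \sum_A psi A * wt A * (bad e (A :|: (B :\: Nb e A)) == A)%:R); split.
  move=> B; apply: sumr_ge0 => A _; apply: mulr_ge0; last by apply: ler0n.
  by apply: mulr_ge0 => //; apply: wt_ge0.
move=> S' /=.
under eq_bigr do rewrite IH step_rho mulrAC mu_rho.
under eq_bigr do rewrite -!mulrA.
rewrite -big_distrr /=; congr (_ * _).
rewrite (eq_bigr (fun S => (psi (bad e S) * wt (bad e S)) * (cnd (bad e S) S S')%:R)); last first.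
  by move=> S _; rewrite [_%:R * _]mulrC mulrA [wt _ * _]mulrC.
rewrite (regroup_sum S' (fun A => psi A * wt A)).
by apply: eq_bigr => A _; rewrite key_c.
Qed.

Lemma mass t : \sum_S prs_dist e lam t S = 1.
Proof.
elim: t => [|t IH] /=.
  under eq_bigr do rewrite mu_init (mu_rhoT finset.set0).
  exact: rho_sum.
rewrite exchange_big /= -[RHS]IH; apply: eq_bigr => S _.
by rewrite -big_distrr /=; under eq_bigr do rewrite step_rho; rewrite rho_sum mulr1.
Qed.

Let d := max_degree e.
Definition deg v := #|[set u | e v u]|.

Lemma deg_le v : (deg v <= d)%N.
Proof. rewrite /d /max_degree /deg; exact: (bigop.leq_bigmax v). Qed.

Lemma deg_sum v : (\sum_u (e v u : nat))%N = deg v.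
Proof.
rewrite /deg -sum1_card [RHS]big_mkcond /=; apply: eq_bigr => u _; rewrite inE; by case: (e v u).
Qed.

Lemma half_pairs (Rs : {set T}) : (\sum_v \sum_u ((e v u && (v \in Rs)) : nat) <= d * #|Rs|)%N.
Proof.
apply: (@leq_trans (\sum_(v in Rs) d)%N); last by rewrite sum_nat_const mulnC.
rewrite [X in (_ <= X)%N]big_mkcond /=; apply: leq_sum => v _; case: (v \in Rs) => /=.
  under eq_bigr do rewrite andbT.
  by rewrite deg_sum deg_le.
by rewrite big1 // => u _; rewrite andbF.
Qed.

Lemma count_pairs (Rs : {set T}) :
  (\sum_v \sum_u ((e v u && ((v \in Rs) || (u \in Rs))) : nat) <= 2 * d * #|Rs|)%N.
Proof.
apply: (@leq_trans (\sum_v \sum_u ((e v u && (v \in Rs)) + (e v u && (u \in Rs))))%N).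
  apply: leq_sum => v _; apply: leq_sum => u _.
  by case: (e v u); case: (v \in Rs); case: (u \in Rs).
under eq_bigr do rewrite big_split /=.
rewrite big_split /= -mulnA mul2n -addnn leq_add ?half_pairs //.
rewrite exchange_big /=.
under eq_bigr do under eq_bigr do rewrite esym.
exact: half_pairs.
Qed.

Lemma card_Nb B : (#|Nb e B| <= d.+1 * #|B|)%N.
Proof.
rewrite /Nb cardsU mulSn; apply: leq_trans (leq_subr _ _) _; rewrite leq_add2l.
apply: (@leq_trans (\sum_u \sum_(w in B) (e w u : nat))%N).
  rewrite -sum1_card big_mkcond /=; apply: leq_sum => u _; case: ifP => // /[dup] ub.
  rewrite inE => /andP [_ /existsP [w /andP [wB ewu]]].
  by rewrite (bigD1 w) //= ewu.
rewrite exchange_big /=; apply: (@leq_trans (\sum_(w in B) d)%N); last by rewrite sum_nat_const mulnC.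
by apply: leq_sum => w _; rewrite deg_sum deg_le.
Qed.

Lemma count_bad (S : {set T}) (Q : T -> T -> bool) :
  (forall v u, v \in S -> u \in S -> e v u -> Q v u) ->
  (#|bad e S| <= \sum_v \sum_u ([&& e v u, Q v u, v \in S & u \in S] : nat))%N.
Proof.
move=> HQ; rewrite -sum1_card big_mkcond /=; apply: leq_sum => v _.
case: ifP => // /[dup] vb; rewrite inE => /andP [vS /existsP [u /andP [uS evu]]].
by rewrite (bigD1 u) //= evu (HQ v u vS uS evu) vS uS.
Qed.

Lemma mu_add u (j : {set T}) : u \notin j -> mu (u |: j) * q = mu j * p.
Proof.
move=> uj; rewrite /mu (bigD1 u) //= [in RHS](bigD1 u) //= finset.in_setU1 eqxx /= (negbTE uj) /=.
rewrite (eq_bigr (fun i => pq (i \in j))); last by move=> i iu; rewrite finset.in_setU1 (negbTE iu).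
by rewrite mulrAC [RHS]mulrAC (mulrC p q).
Qed.

Lemma bad_remove u (j : {set T}) : u \notin bad e (u |: j) -> bad e j = bad e (u |: j).
Proof.
rewrite inE finset.in_setU1 eqxx /= => /existsPn H.
have Hf : [exists x in u |: j, e u x] = false by apply/negbTE/existsPn.
apply/setP => v; rewrite !inE.
case: (eqVneq v u) => [->|vu] /=.
  rewrite Hf; apply/negbTE/negP => /andP [uj /existsP [x /andP [xj eux]]].
  by move: (H x); rewrite finset.in_setU1 xj orbT eux.
case vj: (v \in j) => //=; apply/existsP/existsP => [[x /andP [xj evx]]|[x]].
  by exists x; rewrite finset.in_setU1 xj orbT evx.
rewrite finset.in_setU1 => /andP [/orP [/eqP ->|xj] evx]; last by exists x; rewrite xj.
by move: (H v); rewrite finset.in_setU1 vj orbT esym evx.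
Qed.

Definition MB (B : {set T}) := \sum_(S | bad e S == B) mu S.

Lemma MB_ge0 (B : {set T}) : 0 <= MB B.
Proof. by apply: sumr_ge0 => S _; apply: mu_ge0. Qed.

Lemma marg_bound u (B : {set T}) : u \notin B -> \sum_(S | bad e S == B) mu S * (u \in S)%:R <= p * MB B.
Proof.
move=> uB.
set Min := \sum_(S | bad e S == B) mu S * (u \in S)%:R.
set Mout := \sum_(S | bad e S == B) mu S * (u \notin S)%:R.
have HM : MB B = Min + Mout.
  rewrite /MB -big_split; apply: eq_bigr => S _.
  by case: (u \in S); rewrite /= ?mulr1 ?mulr0 ?addr0 ?add0r.
have Hq : Min * q <= Mout * p.
  have -> : Min * q = \sum_(S : {set T} | u \in S) (bad e S == B)%:R * mu S * q.
    rewrite /Min big_distrl /= big_mkcond [RHS]big_mkcond /=; apply: eq_bigr => S _.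
    by case: (bad e S == B); case: (u \in S); rewrite /= ?mulr1 ?mulr0 ?mul0r ?mul1r.
  have -> : Mout * p = \sum_(S : {set T} | u \notin S) (bad e S == B)%:R * mu S * p.
    rewrite /Mout big_distrl /= big_mkcond [RHS]big_mkcond /=; apply: eq_bigr => S _.
    by case: (bad e S == B); case: (u \in S); rewrite /= ?mulr1 ?mulr0 ?mul0r ?mul1r.
  rewrite (reindex_onto (fun j => u |: j) (fun S => S :\ u)) /=; last first.
    by move=> S uS; rewrite finset.setD1K.
  rewrite (eq_bigl (fun j : {set T} => u \notin j)); last first.
    move=> j; rewrite finset.setU11 /=; case: (boolP (u \in j)) => uj.
      apply/negbTE/eqP => E; move: uj; rewrite -E.
      by rewrite finset.in_setD1 eqxx.
    by rewrite finset.setU1K // eqxx.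
  apply: ler_sum => j uj; rewrite -mulrA mu_add // mulrA.
  case: (boolP (bad e (u |: j) == B)) => H; last by rewrite !mul0r; apply: mulr_ge0; [apply: mulr_ge0; [apply: ler0n| apply: mu_ge0] | apply: ltW; apply: p_gt0].
  have -> : bad e j = bad e (u |: j) by apply: bad_remove; rewrite (eqP H).
  by rewrite H.
have q1 : q = 1 - p by [].
rewrite HM; move: Hq; rewrite q1 mulrBr mulr1 => Hq.
rewrite mulrDr; nra.
Qed.

Lemma rho0 (Rs S S' : {set T}) : ~~ [forall i, (i \in Rs) || ((i \in S') == (i \in S))] -> rho Rs S S' = 0.
Proof.
rewrite negb_forall => /existsP [i]; rewrite negb_or => /andP [iR H].
by rewrite /rho (bigD1 i) //= (negbTE iR) (negbTE H) mul0r.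
Qed.

Lemma step1 (B S : {set T}) : bad e S = B ->
  \sum_S' rho (Nb e B) S S' * (#|bad e S'|)%:R <=
  \sum_v \sum_u (e v u && ((v \in Nb e B) || (u \in Nb e B)))%:R
       * (al (Nb e B) S v * al (Nb e B) S u).
Proof.
move=> bS; set Rs := Nb e B.
apply: (@le_trans _ _ (\sum_S' \sum_v \sum_u
   (e v u && ((v \in Rs) || (u \in Rs)))%:R * (rho Rs S S' * ((v \in S') && (u \in S'))%:R))).
  apply: ler_sum => S' _.
  have -> : \sum_v \sum_u (e v u && ((v \in Rs) || (u \in Rs)))%:R *
             (rho Rs S S' * ((v \in S') && (u \in S'))%:R) =
            rho Rs S S' * \sum_v \sum_u ([&& e v u, (v \in Rs) || (u \in Rs), v \in S' & u \in S'] : nat)%:R.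
    rewrite big_distrr; apply: eq_bigr => v _; rewrite big_distrr; apply: eq_bigr => u _ /=.
    case: (e v u); case: (_ || _); case: (v \in S'); case: (u \in S');
      by rewrite /= ?mul0r ?mulr0 ?mul1r ?mulr1.
  case: (boolP [forall i, (i \in Rs) || ((i \in S') == (i \in S))]) => c; last first.
    by rewrite rho0 // !mul0r.
  apply: ler_wpM2l; first exact: rho_ge0.
  under [X in _ <= X]eq_bigr do rewrite -natr_sum.
  rewrite -natr_sum ler_nat; apply: count_bad => v u vS uS evu.
  apply/negPn/negP; rewrite negb_or => /andP [vR uR].
  have vS0 : v \in S by move: (forallP c v); rewrite (negbTE vR) /= vS => /eqP <-.
  have uS0 : u \in S by move: (forallP c u); rewrite (negbTE uR) /= uS => /eqP <-.
  have : v \in bad e S by rewrite inE vS0; apply/existsP; exists u; rewrite uS0 evu.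
  by rewrite bS => vB; move: vR; rewrite /Rs /Nb finset.in_setU vB.
rewrite exchange_big /=; apply: ler_sum => v _; rewrite exchange_big /=; apply: ler_sum => u _.
rewrite -big_distrr /=; case: (boolP (e v u)) => evu /=; last by rewrite !mul0r.
rewrite rho_marg2 //; by apply/eqP => vu; rewrite vu eirr in evu.
Qed.

Lemma pair_bound (B : {set T}) v u : e v u -> (v \in Nb e B) || (u \in Nb e B) ->
  \sum_(S | bad e S == B) mu S * (al (Nb e B) S v * al (Nb e B) S u) <= p ^+ 2 * MB B.
Proof.
move=> evu vu; set Rs := Nb e B.
have BR : forall x, x \notin Rs -> x \notin B.
  by move=> x; apply: contra => xB; rewrite /Rs /Nb finset.in_setU xB.
have p0 : 0 <= p by apply: ltW; apply: p_gt0.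
rewrite /al; case vR: (v \in Rs); case uR: (u \in Rs); move: vu; rewrite -/Rs vR uR //= => _.
- by rewrite -big_distrl /= mulrC expr2.
- under eq_bigr do rewrite mulrCA.
  rewrite -big_distrr /= expr2 -mulrA ler_wpM2l //; apply: marg_bound; apply: BR; by rewrite uR.
- under eq_bigr do rewrite [_%:R * p]mulrC mulrCA.
  rewrite -big_distrr /= expr2 -mulrA ler_wpM2l //.
  apply: marg_bound; apply: BR; by rewrite vR.
Qed.

Lemma inner_bound (B : {set T}) :
  \sum_(S | bad e S == B) mu S * \sum_S' rho (Nb e B) S S' * (#|bad e S'|)%:R
   <= (2 * d * #|Nb e B|)%:R * p ^+ 2 * MB B.
Proof.
set Rs := Nb e B.
apply: (@le_trans _ _ (\sum_(S | bad e S == B) mu S * \sum_v \sum_u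
   (e v u && ((v \in Rs) || (u \in Rs)))%:R * (al Rs S v * al Rs S u))).
  apply: ler_sum => S /eqP bS; apply: ler_wpM2l; first exact: mu_ge0.
  exact: step1.
apply: (@le_trans _ _ (\sum_v \sum_u (e v u && ((v \in Rs) || (u \in Rs)))%:R * (p ^+ 2 * MB B))).
  under eq_bigr do rewrite big_distrr /=.
  rewrite exchange_big /=; apply: ler_sum => v _.
  under eq_bigr do rewrite big_distrr /=.
  rewrite exchange_big /=; apply: ler_sum => u _.
  under eq_bigr do rewrite mulrCA.
  rewrite -big_distrr /=.
  case: (boolP (e v u && ((v \in Rs) || (u \in Rs)))) => /= [/andP [evu H]|_]; last by rewrite !mul0r.
  by rewrite !mul1r; apply: pair_bound.
under eq_bigr do rewrite -big_distrl /=.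
rewrite -big_distrl /= -mulrA; apply: ler_wpM2r.
  by apply: mulr_ge0; [apply: exprn_ge0; apply: ltW; apply: p_gt0 | apply: MB_ge0].
under eq_bigr do rewrite -natr_sum.
by rewrite -natr_sum ler_nat count_pairs.
Qed.

Lemma nu_ge0 t S : 0 <= prs_dist e lam t S.
Proof. have [psi [psi0 ->]] := inv t; apply: mulr_ge0 => //; exact: mu_ge0. Qed.

Definition Et t := \sum_S prs_dist e lam t S * (#|bad e S|)%:R.

Lemma Et_ge0 t : 0 <= Et t.
Proof. by apply: sumr_ge0 => S _; apply: mulr_ge0; [apply: nu_ge0 | apply: ler0n]. Qed.

Lemma contract t : Et t.+1 <= (2 * d * d.+1)%:R * p ^+ 2 * Et t.
Proof.
have [psi [psi0 Hpsi]] := inv t.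
have -> : Et t.+1 = \sum_S prs_dist e lam t S *
     \sum_S' rho (Nb e (bad e S)) S S' * (#|bad e S'|)%:R.
  rewrite /Et /=; under eq_bigr do rewrite big_distrl /=.
  rewrite exchange_big /=; apply: eq_bigr => S _; rewrite big_distrr /=.
  by apply: eq_bigr => S' _; rewrite step_rho mulrA.
rewrite /Et.
under eq_bigr do rewrite Hpsi.
under [X in _ <= _ * X]eq_bigr do rewrite Hpsi.
rewrite (partition_big (fun S => bad e S) predT) //=.
rewrite [X in _ <= _ * X](partition_big (fun S => bad e S) predT) //= big_distrr /=.
apply: ler_sum => B _.
have -> : \sum_(S | bad e S == B) mu S * psi (bad e S) *
     (\sum_S' rho (Nb e (bad e S)) S S' * (#|bad e S'|)%:R) =
   psi B * \sum_(S | bad e S == B) mu S * \sum_S' rho (Nb e B) S S' * (#|bad e S'|)%:R.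
  by rewrite big_distrr; apply: eq_bigr => S /eqP ->; rewrite mulrAC mulrC.
have -> : \sum_(S | bad e S == B) mu S * psi (bad e S) * (#|bad e S|)%:R =
   psi B * (#|B|)%:R * MB B.
  by rewrite /MB big_distrr; apply: eq_bigr => S /eqP ->; by rewrite [mu S * _]mulrC -mulrA [mu S * _]mulrC mulrA.
apply: le_trans (ler_wpM2l (psi0 B) (inner_bound B)) _.
have H : (2 * d * #|Nb e B| <= 2 * d * d.+1 * #|B|)%N.
  by rewrite -[X in (_ <= X)%N]mulnA leq_mul2l card_Nb orbT.
have -> : (2 * d * d.+1)%:R * p ^+ 2 * (psi B * (#|B|)%:R * MB B) =
   psi B * ((2 * d * d.+1 * #|B|)%:R * p ^+ 2 * MB B) by rewrite [in RHS]natrM; ring.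
have HP : 0 <= p ^+ 2 * MB B.
  by apply: mulr_ge0; [apply: exprn_ge0; apply: ltW; apply: p_gt0 | apply: MB_ge0].
apply: ler_wpM2l => //.
rewrite -[(2 * d * #|Nb e B|)%:R * p ^+ 2 * MB B]mulrA.
rewrite -[(2 * d * d.+1 * #|B|)%:R * p ^+ 2 * MB B]mulrA.
by apply: ler_wpM2r => //; rewrite ler_nat.
Qed.

Lemma E0_bound : Et 0 <= (#|T| * d)%:R * p ^+ 2.
Proof.
rewrite /Et /=; under eq_bigr do rewrite mu_init.
apply: (@le_trans _ _ (\sum_S mu S * \sum_v \sum_u ([&& e v u, true, v \in S & u \in S] : nat)%:R)).
  apply: ler_sum => S _; apply: ler_wpM2l; first exact: mu_ge0.
  under [X in _ <= X]eq_bigr do rewrite -natr_sum.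
  by rewrite -natr_sum ler_nat; apply: count_bad.
apply: (@le_trans _ _ (\sum_v \sum_u (e v u : nat)%:R * p ^+ 2)).
  under eq_bigr do rewrite big_distrr /=.
  rewrite exchange_big /=; apply: ler_sum => v _.
  under eq_bigr do rewrite big_distrr /=.
  rewrite exchange_big /=; apply: ler_sum => u _.
  case: (boolP (e v u)) => evu /=; last first.
    by rewrite mul0r big1 // => S _; rewrite mulr0.
  rewrite mul1r.
  under eq_bigr do rewrite (mu_rhoT finset.set0).
  rewrite rho_marg2; last by apply/eqP => vu; rewrite vu eirr in evu.
  by rewrite /al !finset.in_setT expr2.
under eq_bigr do rewrite -big_distrl /=.
rewrite -big_distrl /=; under eq_bigr do rewrite -natr_sum.
rewrite -natr_sum; apply: ler_wpM2r; first by apply: exprn_ge0; apply: ltW; apply: p_gt0.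
rewrite ler_nat; under eq_bigr do rewrite deg_sum.
apply: (@leq_trans (\sum_(v : T) d)%N); first by apply: leq_sum => v _; apply: deg_le.
by rewrite sum_nat_const.
Qed.

Lemma round_costE S : round_cost e S = #|Nb e (bad e S)|.
Proof.
rewrite /round_cost indep_bad //; case: eqP => [->|_]; first by rewrite Nb0 finset.cards0.
by rewrite resampleE.
Qed.

Lemma cost_bound t : \sum_S prs_dist e lam t S * (round_cost e S)%:R <= (d.+1)%:R * Et t.
Proof.
rewrite /Et big_distrr /=; apply: ler_sum => S _.
rewrite round_costE mulrCA; apply: ler_wpM2l; first exact: nu_ge0.
by rewrite -natrM ler_nat card_Nb.
Qed.

Lemma NI_bound t : \sum_(S | ~~ indep e S) prs_dist e lam t S <= Et t.
Proof.
apply: (@le_trans _ _ (\sum_(S | ~~ indep e S) prs_dist e lam t S * (#|bad e S|)%:R)).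
  apply: ler_sum => S nS; rewrite -[X in X <= _]mulr1; apply: ler_wpM2l; first exact: nu_ge0.
  by rewrite ler1n finset.card_gt0 -indep_bad.
rewrite /Et [X in _ <= X](bigID (fun S => ~~ indep e S)) /= lerDl.
by apply: sumr_ge0 => S _; apply: mulr_ge0; [apply: nu_ge0 | apply: ler0n].
Qed.

Section Bounds.
Hypothesis Hlam : lam <= (2 * Num.sqrt (expR 1) * d%:R - 1)^-1.

Lemma K_bound : (d * d.+1)%:R * p ^+ 2 <= 4^-1.
Proof.
set s := Num.sqrt (expR 1 : R).
set x := 2 * s * d%:R - 1.
have x0 : 0 < x by rewrite -invr_gt0; apply: lt_le_trans Hlam.
have lx : lam * x <= 1.
  by rewrite -(mulVf (lt0r_neq0 x0)); apply: ler_wpM2r => //; apply: ltW.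
have s0 : 0 <= s by apply: sqrtr_ge0.
have s2 : s ^+ 2 = expR 1 by rewrite sqr_sqrtr // expR_ge0.
have e2 : 2 <= expR 1 :> R by have := expR_ge1Dx (1 : R); rewrite (_ : 1 + 1 = 2 :> R) //.
have pE : p * (1 + lam) = lam.
  by rewrite /p /occ_prob mulfVK //; apply: lt0r_neq0; apply: addr_gt0.
have p0 : 0 < p by apply: p_gt0.
set D := d%:R : R.
have D1 : 1 <= D.
  rewrite /D ler1n lt0n; apply/eqP => d0; move: x0; rewrite /x d0 mulr0 sub0r oppr_gt0.
  by rewrite ltNge ler01.
have h1 : 2 * s * D * p <= 1.
  have l0 : 0 < 1 + lam by apply: addr_gt0.
  have h : p * (1 + lam) * (2 * s * D) <= 1 + lam.
    rewrite pE; move: lx; rewrite /x -/D mulrBr mulr1 => h; lra.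
  nra.
have h2 : 4 * expR 1 * (D * p) ^+ 2 <= 1.
  rewrite -s2; have : 0 <= 2 * s * D * p.
    by apply: mulr_ge0; [apply: mulr_ge0; [apply: mulr_ge0|] | ]; lra.
  move=> h0; have := h1; nra.
have h4 : 0 <= (D * p) ^+ 2 by apply: sqr_ge0.
have h3 : 8 * (D * p) ^+ 2 <= 1 by nra.
have hp2 : 0 <= p ^+ 2 by apply: sqr_ge0.
have h6 : D * p ^+ 2 <= (D * p) ^+ 2.
  have h7 : 0 <= (D - 1) * (D * p ^+ 2) by apply: mulr_ge0; [lra | apply: mulr_ge0 => //; lra].
  rewrite [(D * p) ^+ 2]exprMn; move: h7; rewrite mulrBl mul1r mulrA -expr2; lra.
rewrite natrM -/D (_ : (d.+1)%:R = D + 1); last by rewrite /D -natr1.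
have -> : D * (D + 1) * p ^+ 2 = (D * p) ^+ 2 + D * p ^+ 2 by rewrite [(D * p) ^+ 2]exprMn; ring.
lra.
Qed.

Lemma th_half : (2 * d * d.+1)%:R * p ^+ 2 <= 2^-1.
Proof.
have K := K_bound; rewrite -mulnA natrM -mulrA.
have -> : (2^-1 : R) = 2 * 4^-1 by lra.
by apply: ler_wpM2l => //; lra.
Qed.

Lemma Et_half t : Et t.+1 <= 2^-1 * Et t.
Proof.
apply: le_trans (contract t) _; apply: ler_wpM2r; [exact: Et_ge0 | exact: th_half].
Qed.

Lemma Et_geom t : Et t <= (2^-1) ^+ t * Et 0.
Proof.
elim: t => [|t IH]; first by rewrite expr0 mul1r.
apply: le_trans (Et_half t) _; rewrite exprS -mulrA; apply: ler_wpM2l => //; lra.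
Qed.

Lemma sum_Et t : \sum_(i < t) Et i + 2 * Et t <= 2 * Et 0.
Proof.
elim: t => [|t IH]; first by rewrite big_ord0 add0r.
rewrite big_ord_recr /=; have := Et_half t; lra.
Qed.

Lemma cost_final t : expected_cost e lam t <= 2 * (#|T|)%:R.
Proof.
rewrite /expected_cost.
have H1 : \sum_(i < t) \sum_S prs_dist e lam i S * (round_cost e S)%:R
          <= (d.+1)%:R * \sum_(i < t) Et i.
  by rewrite big_distrr; apply: ler_sum => i _; apply: cost_bound.
have H2 : \sum_(i < t) Et i <= 2 * Et 0 by have := sum_Et t; have := Et_ge0 t; lra.
have H3 := E0_bound.
have K := K_bound.
have H4 : (d.+1)%:R * \sum_(i < t) Et i <= (d.+1)%:R * (2 * ((#|T| * d)%:R * p ^+ 2)).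
  by apply: ler_wpM2l => //; apply: le_trans H2 _; apply: ler_wpM2l => //; lra.
have H5 : (d.+1)%:R * (2 * ((#|T| * d)%:R * p ^+ 2)) =
          2 * (#|T|)%:R * ((d * d.+1)%:R * p ^+ 2) by rewrite !natrM; ring.
have H6 : 2 * (#|T|)%:R * ((d * d.+1)%:R * p ^+ 2) <= 2 * (#|T|)%:R * 4^-1.
  by apply: ler_wpM2l => //; apply: mulr_ge0 => //; apply: ler0n.
have n0 : 0 <= (#|T|)%:R :> R by apply: ler0n.
lra.
Qed.

Definition NI t := \sum_(S | ~~ indep e S) prs_dist e lam t S.
Definition Mi := \sum_(S | indep e S) mu S.

Lemma NI_ge0 t : 0 <= NI t.
Proof. by apply: sumr_ge0 => S _; apply: nu_ge0. Qed.

Lemma bad0 : bad e finset.set0 = finset.set0.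
Proof. by apply/setP => v; rewrite !inE. Qed.

Lemma Mi_gt0 : 0 < Mi.
Proof.
rewrite /Mi (bigD1 finset.set0) /=; last by rewrite indep_bad // bad0.
apply: ltr_pwDl.
  by apply: prodr_gt0 => i _; rewrite finset.in_set0 /pq; apply: q_gt0.
by apply: sumr_ge0 => S _; apply: mu_ge0.
Qed.

Lemma nuI t I : indep e I -> prs_dist e lam t I * Mi = mu I * (1 - NI t).
Proof.
move=> HI; have [psi [_ H]] := inv t.
have bI : forall S, indep e S -> bad e S = finset.set0 by move=> S; rewrite indep_bad // => /eqP.
have M := mass t; rewrite (bigID (fun S => indep e S)) /= in M.
have E : \sum_(S | indep e S) prs_dist e lam t S = Mi * psi finset.set0.
  by rewrite /Mi big_distrl; apply: eq_bigr => S HS; rewrite H bI.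
rewrite E in M.
rewrite -/(NI t) in M.
rewrite H bI // -M; ring.
Qed.

Lemma p_eq : p = lam * q.
Proof.
rewrite /q /p /occ_prob; have h : 1 + lam != 0 by apply: lt0r_neq0; apply: addr_gt0.
field; exact: h.
Qed.

Lemma muE S : mu S = q ^+ #|T| * lam ^+ #|S|.
Proof.
rewrite -mu_init /init_dist -/p -/q p_eq exprMn -(cardsC S) exprD; ring.
Qed.

Lemma hZ : Mi = q ^+ #|T| * hardcore_Z e lam.
Proof. by rewrite /Mi /hardcore_Z big_distrr; apply: eq_bigr => S _; rewrite muE. Qed.

Local Open Scope classical_set_scope.
Local Open Scope ring_scope.
Lemma NI_cvg : NI @ \oo --> 0.
Proof.
apply: (squeeze_cvgr (f := fun _ => 0) (h := geometric (Et 0) (2^-1))).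
- apply: nearW => t; rewrite NI_ge0 /=; apply: le_trans (NI_bound t) _.
  by rewrite /geometric /= mulrC; apply: Et_geom.
- exact: cvg_cst.
- apply: cvg_geometric; rewrite ger0_norm; lra.
Qed.

Lemma conv_final I : indep e I ->
  (fun t => prs_dist e lam t I) @ \oo --> lam ^+ #|I| / hardcore_Z e lam.
Proof.
move=> HI; set c := mu I / Mi.
have Mi0 : Mi != 0 by apply: lt0r_neq0; apply: Mi_gt0.
have Hf : (fun t => prs_dist e lam t I) = (fun t => c - NI t * c).
  apply: funext => t; apply: (mulIf Mi0); rewrite nuI // /c; field; exact: Mi0.
have H2 : (fun t => NI t * c) @ \oo --> 0 * c by apply: cvgMl; exact: NI_cvg.
have H3 : ((fun=> c) - (fun t => NI t * c)) x @[x --> \oo] --> c - 0 * c.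
  by apply: cvgB => //; exact: cvg_cst.
rewrite mul0r subr0 in H3.
have -> : lam ^+ #|I| / hardcore_Z e lam = c.
  rewrite /c hZ muE; have q0 : q ^+ #|T| != 0 by apply: expf_neq0; apply: lt0r_neq0; apply: q_gt0.
  have Z0 : hardcore_Z e lam != 0.
    by move: Mi0; rewrite hZ mulf_eq0 negb_or => /andP [].
  field; by rewrite q0 Z0.
by rewrite Hf; exact: H3.
Qed.

End Bounds.

End Alg.

Local Open Scope classical_set_scope.
Local Open Scope ring_scope.

Theorem theorem36 (R : realType) :
  (forall (T : finType) (e : rel T) (d : nat) (lam : R),
     simple_graph e -> max_degree e = d ->
     0 < lam -> lam <= (2 * Num.sqrt (expR 1) * d%:R - 1)^-1 ->
     forall I : {set T}, indep e I ->
       (fun t => prs_dist e lam t I) @ \oo --> lam ^+ #|I| / hardcore_Z e lam)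
  /\
  (exists C : R, 0 < C /\
     forall (T : finType) (e : rel T) (d : nat) (lam : R),
       simple_graph e -> max_degree e = d ->
       0 < lam -> lam <= (2 * Num.sqrt (expR 1) * d%:R - 1)^-1 ->
       forall t : nat, expected_cost e lam t <= C * #|T|%:R).
Proof.
split.
  move=> T e d lam [esym eirr] Hd lam0 Hlam I HI; rewrite -Hd in Hlam.
  exact: (conv_final esym eirr lam0 Hlam HI).
exists 2; split; first lra.
move=> T e d lam [esym eirr] Hd lam0 Hlam t; rewrite -Hd in Hlam.
exact: (cost_final esym eirr lam0 Hlam t).
Qed.
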